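(* A family of structures $\mathfrak{K}$ is $\mathbf{nUs}$-learnable if and only if $\mathfrak{K}$ is a solid $\Sigma^{\mathrm{inf}}_1$-partial order.
   Context: All structures are countable, have domain $\mathbb{N}$, are in a finite relational signature, and are identified with their atomic diagrams. A family of structures $\mathfrak{K}$ is a countable set of pairwise nonisomorphic such structures. $\mathcal{S}\restriction_s$ is the finite substructure of $\mathcal{S}$ on $\{0,\dots,s\}$. $\mathrm{LD}(\mathfrak{K})$ is the set of structures with domain $\mathbb{N}$ isomorphic to a member of $\mathfrak{K}$. The hypothesis space is $\{\ulcorner\mathcal{A}\urcorner:\mathcal{A}\in\mathfrak{K}\}\cup\{?\}$; a learner is an arbitrary function $\mathbf{M}$ from $\{\mathcal{S}\restriction_s:\mathcal{S}\in\mathrm{LD}(\mathfrak{K}),s\in\mathbb{N}\}$ to the hypothesis space. $\mathbf{M}$ $\mathbf{nUs}$-learns $\mathfrak{K}$ if for every $\mathcal{S}\in\mathrm{LD}(\mathfrak{K})$ with $\mathcal{S}\cong\mathcal{A}\in\mathfrak{K}$, $\mathbf{M}(\mathcal{S}\restriction_n)$ is eventually constantly $\ulcorner\mathcal{A}\urcorner$, and moreover if $n_0$ is least with $\mathbf{M}(\mathcal{S}\restriction_{n_0})=\ulcorner\mathcal{A}\urcorner$ then $\mathbf{M}(\mathcal{S}\restriction_m)=\ulcorner\mathcal{A}\urcorner$ for all $m>n_0$; $\mathfrak{K}$ is $\mathbf{nUs}$-learnable if some learner $\mathbf{nUs}$-learns it. $\mathrm{Th}_{\Sigma^{\mathrm{inf}}_1}(\mathcal{A})$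 is the set of $\Sigma^{\mathrm{inf}}_1$ sentences of $\mathcal{L}_{\omega_1\omega}$ true in $\mathcal{A}$ (a $\Sigma^{\mathrm{inf}}_1$ formula is a countable disjunction $\bigvee_i\exists\bar y_i\,\psi_i$ with each $\psi_i$ finitary quantifier-free). $\mathfrak{K}$ is a $\Sigma^{\mathrm{inf}}_1$-partial order if distinct members have distinct $\Sigma^{\mathrm{inf}}_1$-theories. $\mathfrak{K}$ is a solid $\Sigma^{\mathrm{inf}}_1$-partial order if it is a $\Sigma^{\mathrm{inf}}_1$-partial order and for every (nonempty) $\mathcal{A}\in\mathfrak{K}$, $\mathrm{Th}_{\Sigma^{\mathrm{inf}}_1}(\mathcal{A})\setminus\bigcup\{\mathrm{Th}_{\Sigma^{\mathrm{inf}}_1}(\mathcal{B}):\mathcal{B}\in\mathfrak{K},\ \mathrm{Th}_{\Sigma^{\mathrm{inf}}_1}(\mathcal{B})\subsetneq\mathrm{Th}_{\Sigma^{\mathrm{inf}}_1}(\mathcal{A})\}\neq\emptyset$. *)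

(* Defs.v *)
From mathcomp Require Import all_boot.

Set Implicit Arguments.
Unset Strict Implicit.
Unset Printing Implicit Defensive.

Section Learning.

(* A finite relational signature: k relation symbols, symbol i of arity ar i. *)
Variable k : nat.
Variable ar : 'I_k -> nat.

(* A structure with domain nat, identified with its atomic diagram:
   for each symbol i, the set of (ar i)-tuples on which R_i holds. *)
Definition structure := forall i : 'I_k, (ar i).-tuple nat -> Prop.

Definition iso (A B : structure) : Prop :=
  exists f : nat -> nat, bijective f /\
    forall (i : 'I_k) (t : (ar i).-tuple nat), A i t <-> B i (map_tuple f t).

(* A family: a countable set of pairwise nonisomorphic structures. *)
Definition struct_family (K : structure -> Prop) : Prop :=
  (exists g : structure -> nat,
      forall A B, K A -> K B -> g A = g B -> A = B) /\
  (forall A B, K A -> K B -> iso A B -> A = B).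

Definition LD (K : structure -> Prop) (S : structure) : Prop :=
  exists A, K A /\ iso S A.

(* The finite substructure S|_s on {0,...,s}, encoded by the pair (s, restr s S):
   restr s S is the atomic diagram of S restricted to tuples from {0,...,s}. *)
Definition restr (s : nat) (S : structure) : structure :=
  fun i t => all (fun x => x <= s) t /\ S i t.

(* A learner: a map from finite substructures (s, S|_s) to the hypothesis space,
   where [Some A] stands for the code of A and [None] for '?'. Since it is only
   ever applied to [restr s S], its value depends only on s and S|_s. *)
Definition learner := nat -> structure -> option structure.

Definition nUs_learns (M : learner) (K : structure -> Prop) : Prop :=
  (forall s S A, LD K S -> M s (restr s S) = Some A -> K A) /\
  forall S A, LD K S -> K A -> iso S A ->
    (exists N, forall n, N <= n -> M n (restr n S) = Some A) /\
    (forall n0, M n0 (restr n0 S) = Some A ->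
       (forall n, n < n0 -> M n (restr n S) <> Some A) ->
       forall m, n0 < m -> M m (restr m S) = Some A).

Definition nUs_learnable (K : structure -> Prop) : Prop :=
  exists M : learner, nUs_learns M K.

Inductive qf : Type :=
| QTrue : qf
| QRel (i : 'I_k) (t : (ar i).-tuple nat) : qf
| QEq (x y : nat) : qf
| QNot (p : qf) : qf
| QAnd (p q : qf) : qf
| QOr (p q : qf) : qf.

Fixpoint qf_sat (A : structure) (a : nat -> nat) (p : qf) : Prop :=
  match p with
  | QTrue => True
  | QRel i t => A i (map_tuple a t)
  | QEq x y => a x = a y
  | QNot p => ~ qf_sat A a p
  | QAnd p q => qf_sat A a p /\ qf_sat A a q
  | QOr p q => qf_sat A a p \/ qf_sat A a q
  end.

(* A Sigma^inf_1 sentence: a countable disjunction  \/_n  exists y_n, psi_n,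
   where psi_n is finitary quantifier-free and y_n lists all variables of psi_n
   (so each disjunct is a sentence). *)
Definition sigma1_sentence := nat -> qf.

Definition sat1 (A : structure) (phi : sigma1_sentence) : Prop :=
  exists n, exists a : nat -> nat, qf_sat A a (phi n).

Definition Th1 (A : structure) : sigma1_sentence -> Prop := fun phi => sat1 A phi.

Definition Th_sub (A B : structure) : Prop := forall phi, Th1 A phi -> Th1 B phi.
Definition Th_eq (A B : structure) : Prop := forall phi, Th1 A phi <-> Th1 B phi.
Definition Th_strict (B A : structure) : Prop := Th_sub B A /\ ~ Th_sub A B.

Definition sigma1_partial_order (K : structure -> Prop) : Prop :=
  forall A B, K A -> K B -> A <> B -> ~ Th_eq A B.

Definition solid_sigma1_partial_order (K : structure -> Prop) : Prop :=
  sigma1_partial_order K /\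
  forall A, K A ->
    exists phi, Th1 A phi /\
      forall B, K B -> Th_strict B A -> ~ Th1 B phi.

End Learning.

(* Main.v *)
Require Import Defs.
From mathcomp Require Import all_boot.
From Stdlib Require Import Classical ClassicalEpsilon FunctionalExtensionality PropExtensionality.

Set Implicit Arguments.
Unset Strict Implicit.
Unset Printing Implicit Defensive.



Fixpoint vars k (ar : 'I_k -> nat) (p : qf ar) : seq nat :=
  match p with
  | QTrue => [::]
  | QRel _ t => tval t
  | QEq x y => [:: x; y]
  | QNot p => vars p
  | QAnd p q => vars p ++ vars q
  | QOr p q => vars p ++ vars q
  end.

Lemma map_tuple_comp n (T U V : Type) (f : U -> V) (g : T -> U) (t : n.-tuple T) :
  map_tuple f (map_tuple g t) = map_tuple (fun x => f (g x)) t.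
Proof. apply: val_inj => /=. by rewrite -map_comp. Qed.

Lemma map_tuple_id n (T : Type) (t : n.-tuple T) : map_tuple (fun x => x) t = t.
Proof. apply: val_inj => /=. by rewrite map_id. Qed.

Lemma qf_transfer k (ar : 'I_k -> nat) (S A : structure ar) (P : pred nat)
  (h b : nat -> nat) (p : qf ar) :
  (forall x, x \in vars p -> P (b x)) ->
  (forall x y, P x -> P y -> h x = h y -> x = y) ->
  (forall i (t : (ar i).-tuple nat), all P t -> (S i t <-> A i (map_tuple h t))) ->
  (qf_sat S b p <-> qf_sat A (fun x => h (b x)) p).
Proof.
move=> Hb Hh HSA; elim: p Hb => /=.
- by [].
- move=> i t Hb. rewrite -[map_tuple (fun x => h (b x)) t]map_tuple_comp.
  apply: (HSA i (map_tuple b t)).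
  by rewrite /= all_map; apply/allP => x /Hb.
- move=> x y Hb; split; first by move=> ->.
  apply: Hh; apply: Hb; by rewrite !inE eqxx ?orbT.
- move=> p IH Hb; rewrite IH //.
- move=> p IHp q IHq Hb; rewrite IHp ?IHq //; move=> x Hx; apply: Hb;
  by rewrite mem_cat Hx ?orbT.
- move=> p IHp q IHq Hb; rewrite IHp ?IHq //; move=> x Hx; apply: Hb;
  by rewrite mem_cat Hx ?orbT.
Qed.

Lemma iso_sat k (ar : 'I_k -> nat) (S A : structure ar) :
  iso S A -> exists f : nat -> nat, forall b p,
   qf_sat S b p <-> qf_sat A (fun x => f (b x)) p.
Proof.
case=> f [fb Hf]; exists f => b p; apply: (qf_transfer (P := predT)) => //.
by move=> x y _ _; apply: bij_inj.
Qed.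

Lemma iso_sym k (ar : 'I_k -> nat) (S A : structure ar) : iso S A -> iso A S.
Proof.
case=> f [[g fg gf] Hf]; exists g; split; first by exists f.
move=> i t; rewrite Hf map_tuple_comp.
have -> : map_tuple (fun x => f (g x)) t = t.
  by apply: val_inj => /=; rewrite (eq_map gf) map_id.
by [].
Qed.

Lemma iso_refl k (ar : 'I_k -> nat) (S : structure ar) : iso S S.
Proof. exists id; split; first by exists id. by move=> i t; rewrite map_tuple_id. Qed.

Lemma iso_Th1 k (ar : 'I_k -> nat) (S A : structure ar) phi :
  iso S A -> Th1 S phi -> Th1 A phi.
Proof.
move=> /iso_sat [f Hf] [n [a Ha]]; exists n; exists (fun x => f (a x)).
by apply/Hf.
Qed.

Lemma structure_ext k (ar : 'I_k -> nat) (X Y : structure ar) :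
  (forall i t, X i t <-> Y i t) -> X = Y.
Proof.
move=> H; apply: functional_extensionality_dep => i.
apply: functional_extensionality => t; apply: propositional_extensionality; exact: H.
Qed.

Lemma restr_ext k (ar : 'I_k -> nat) n (X Y : structure ar) :
  (forall i (t : (ar i).-tuple nat), all (fun x => x <= n) t -> (X i t <-> Y i t)) ->
  restr n X = restr n Y.
Proof.
move=> H; apply: structure_ext => i t; rewrite /restr; split; case=> Ht HX;
  split=> //; by apply/(H i t Ht).
Qed.

Lemma restr_restr k (ar : 'I_k -> nat) m n (X : structure ar) :
  m <= n -> restr m (restr n X) = restr m X.
Proof.
move=> mn; apply: structure_ext => i t; rewrite /restr; split.
- by case=> Ht [_ HX].
- case=> Ht HX; split=> //; split=> //.
  apply: sub_all Ht => x /= xm; exact: leq_trans xm mn.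
Qed.

Lemma restr_restr_eq k (ar : 'I_k -> nat) m n (X Y : structure ar) :
  m <= n -> restr n X = restr n Y -> restr m X = restr m Y.
Proof. by move=> mn E; rewrite -(restr_restr X mn) E restr_restr. Qed.

Lemma sat_restr k (ar : 'I_k -> nat) s (S : structure ar) b p :
  (forall x, x \in vars p -> b x <= s) ->
  (qf_sat (restr s S) b p <-> qf_sat S b p).
Proof.
move=> Hb; symmetry.
apply: (qf_transfer (P := fun x => x <= s) (h := id)) => //.
by move=> i t Ht; rewrite map_tuple_id /restr; split=> // [[]].
Qed.

Definition bnd (b : nat -> nat) (l : seq nat) := foldr maxn 0 (map b l).

Lemma bnd_ge b l x : x \in l -> b x <= bnd b l.
Proof.
elim: l => //= y l IH; rewrite inE => /orP [/eqP -> | /IH H].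
- exact: leq_maxl.
- exact: leq_trans H (leq_maxr _ _).
Qed.

Lemma min_exists (P : nat -> Prop) : (exists n, P n) ->
  exists n, P n /\ forall m, P m -> n <= m.
Proof.
move=> [n0 Hn0]; apply: NNPP => Hno.
have H : forall n m, m <= n -> ~ P m.
  elim=> [|n IH] m.
  - rewrite leqn0 => /eqP -> P0; apply: Hno; exists 0; split=> // m' _.
  - rewrite leq_eqVlt => /orP [/eqP -> | Hm]; last exact: IH.
    move=> Pn; apply: Hno; exists n.+1; split=> // m' Pm.
    rewrite ltnNge; apply/negP => Hmn; exact: (IH m' Hmn).
exact: (H n0 n0 (leqnn _)).
Qed.



Definition lit k (ar : 'I_k -> nat) (P : Prop) (q : qf ar) : qf ar :=
  if excluded_middle_informative P then q else QNot q.

Definition bigand k (ar : 'I_k -> nat) (l : seq (qf ar)) : qf ar := foldr (@QAnd _ ar) (QTrue ar) l.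

Lemma sat_bigand k (ar : 'I_k -> nat) (T : eqType) (F : T -> qf ar) (l : seq T) A a :
  qf_sat A a (bigand (map F l)) <-> forall x, x \in l -> qf_sat A a (F x).
Proof.
elim: l => [|y l IH] /=; first by split.
rewrite IH; split.
- by case=> Hy Hl x; rewrite inE => /orP [/eqP -> | /Hl].
- by move=> H; split; [apply: H; rewrite inE eqxx | move=> x Hx; apply: H; rewrite inE Hx orbT].
Qed.

Definition diag_rel k (ar : 'I_k -> nat) n (A : structure ar) : qf ar :=
  bigand (map (fun i => bigand (map (fun t : (ar i).-tuple 'I_n.+1 =>
     lit (A i (map_tuple val t)) (QRel (map_tuple val t))) (enum {: (ar i).-tuple 'I_n.+1})))
   (enum 'I_k)).

Definition diag_neq k (ar : 'I_k -> nat) n : qf ar :=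
  bigand (map (fun xy : 'I_n.+1 * 'I_n.+1 =>
     if xy.1 == xy.2 then QTrue ar else QNot (QEq ar xy.1 xy.2)) (enum {: 'I_n.+1 * 'I_n.+1})).

Definition diag k (ar : 'I_k -> nat) n (A : structure ar) : sigma1_sentence ar :=
  fun _ => QAnd (diag_rel n A) (diag_neq ar n).

Lemma diag_self k (ar : 'I_k -> nat) n (A : structure ar) : Th1 A (diag n A).
Proof.
exists 0; exists id; split.
- apply/sat_bigand => i _; apply/sat_bigand => t _; rewrite /lit.
  case: excluded_middle_informative => /= H; by rewrite map_tuple_id.
- apply/sat_bigand => [[x y]] _ /=; case: eqP => //= Hxy Hv; apply: Hxy.
  exact: val_inj.
Qed.

Lemma diag_embed k (ar : 'I_k -> nat) n (A C : structure ar) :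
  Th1 C (diag n A) -> exists h : nat -> nat,
   (forall x y, x <= n -> y <= n -> h x = h y -> x = y) /\
   (forall i (t : (ar i).-tuple nat), all (fun x => x <= n) t ->
      (A i t <-> C i (map_tuple h t))).
Proof.
case=> _ [a [/sat_bigand Hrel /sat_bigand Hneq]]; exists a; split.
- move=> x y xn yn Hxy; apply: NNPP => Hne.
  have := Hneq (inord x, inord y); rewrite mem_enum /= => /(_ isT).
  have -> : (inord x == inord y :> 'I_n.+1) = false.
    apply/negP => /eqP /(congr1 (@nat_of_ord _)); rewrite !inordK // ; by [].
  by rewrite /= !inordK.
- move=> i t Ht.
  have := Hrel i; rewrite mem_enum => /(_ isT) /sat_bigand.
  move=> /(_ (map_tuple (@inord n) t)); rewrite mem_enum => /(_ isT).
  have -> : map_tuple val (map_tuple (@inord n) t) = t.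
    apply: val_inj => /=; rewrite -map_comp -[RHS]map_id; apply/eq_in_map => x Hx /=.
    by rewrite inordK // ltnS; move/allP: Ht => /(_ x Hx).
  rewrite /lit; case: excluded_middle_informative => /= H1 H2; split=> // H3.

Qed.

Definition tr (a b x : nat) := if x == a then b else if x == b then a else x.

Lemma tr_inv a b : involutive (tr a b).
Proof.
move=> x; rewrite /tr.
case: (eqVneq x a) => [->|xa]; first by rewrite eqxx; case: eqVneq => // ->.
case: (eqVneq x b) => [->|xb]; first by rewrite eqxx.
by rewrite (negbTE xa) (negbTE xb).
Qed.

Lemma extend_bij (h : nat -> nat) n :
  (forall x y, x <= n -> y <= n -> h x = h y -> x = y) ->
  exists f, bijective f /\ forall x, x <= n -> f x = h x.
Proof.
move=> Hh.
suff : forall j, j <= n.+1 -> exists f, bijective f /\ forall x, x < j -> f x = h x.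
  by move=> /(_ n.+1 (leqnn _)).
elim=> [|j IH] Hj.
  by exists id; split=> //; exists id.
have [f [fb Hf]] := IH (ltnW Hj).
exists (tr (f j) (h j) \o f); split.
  apply: bij_comp => //; exact: inv_bij (tr_inv _ _).
move=> x; rewrite ltnS leq_eqVlt => /orP [/eqP -> | xj] /=.
  by rewrite /tr eqxx.
rewrite /= /tr (Hf x xj).
have -> : (h x == f j) = false.
  apply/negP => /eqP; rewrite -Hf // => /(bij_inj fb) E; by rewrite E ltnn in xj.
have -> : (h x == h j) = false.
  apply/negP => /eqP /Hh; rewrite -ltnS => E.
  have := E (ltnW (leq_trans xj Hj)) Hj; move=> E0; by rewrite E0 ltnn in xj.
by [].
Qed.

Lemma embed_copy k (ar : 'I_k -> nat) n (A B : structure ar) :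
  Th1 B (diag n A) -> exists S : structure ar, iso S B /\ restr n S = restr n A.
Proof.
case/diag_embed => h [Hh HA].
have [f [fb fh]] := extend_bij Hh.
exists (fun i t => B i (map_tuple f t)); split.
  by exists f; split.
apply: restr_ext => i t Ht; rewrite HA //.
have -> : map_tuple f t = map_tuple h t.
  apply: val_inj => /=; apply/eq_in_map => x Hx; apply: fh; exact: (allP Ht).
by [].
Qed.



Lemma key k (ar : 'I_k -> nat) (M : learner ar) (K : structure ar -> Prop) A B n0 :
  nUs_learns M K -> K A -> K B -> A <> B -> Th_sub B A ->
  M n0 (restr n0 A) = Some A -> (forall n, n < n0 -> M n (restr n A) <> Some A) ->
  Th1 B (diag n0 A) -> False.
Proof.
move=> [_ HL] KA KB AB BA Mn0 Hleast /embed_copy [SB [isoB rB]].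
have LDB : LD K SB by exists B.
have [[N HN] _] := HL SB B LDB KB isoB.
set n1 := (N + n0).+1.
have Mn1 : M n1 (restr n1 SB) = Some B by apply: HN; exact: leq_trans (leq_addr n0 N) (leqnSn _).
have : Th1 A (diag n1 SB) by apply: BA; apply: iso_Th1 isoB _; apply: diag_self.
case/embed_copy => SA [isoA rA].
have LDA : LD K SA by exists A.
have [_ HU] := HL SA A LDA KA isoA.
have n0n1 : n0 <= n1 by exact: leq_trans (leq_addl N n0) (leqnSn _).
have rA0 : forall m, m <= n0 -> restr m SA = restr m A.
  move=> m mn0; rewrite (restr_restr_eq (leq_trans mn0 n0n1) rA).
  exact: restr_restr_eq mn0 rB.
have := HU n0; rewrite rA0 // => /(_ Mn0).
have H : forall n, n < n0 -> M n (restr n SA) <> Some A.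
  by move=> n nn0; rewrite rA0; [apply: Hleast | apply: ltnW].
move=> /(_ H n1); rewrite rA Mn1.
have Hlt : n0 < n1 by rewrite /n1 ltnS leq_addl.
by move=> /(_ Hlt) [E]; apply: AB.
Qed.

Lemma first_stage k (ar : 'I_k -> nat) (M : learner ar) (K : structure ar -> Prop) A :
  nUs_learns M K -> K A -> exists n0, M n0 (restr n0 A) = Some A /\
     (forall n, n < n0 -> M n (restr n A) <> Some A).
Proof.
move=> [_ HL] KA.
have [[N HN] _] := HL A A (ex_intro _ A (conj KA (iso_refl A))) KA (iso_refl A).
have [n0 [H1 H2]] := min_exists (P := fun n => M n (restr n A) = Some A)
  (ex_intro _ N (HN N (leqnn _))).
exists n0; split=> // n nn0 Hn; have := H2 n Hn; by rewrite leqNgt nn0.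
Qed.

Lemma learnable_solid k (ar : 'I_k -> nat) (K : structure ar -> Prop) :
  nUs_learnable K -> solid_sigma1_partial_order K.
Proof.
case=> M HM; split.
- move=> A B KA KB AB Heq.
  have [n0 [H1 H2]] := first_stage HM KA.
  apply: (key HM KA KB AB _ H1 H2).
  + by move=> phi /Heq.
  + by apply/Heq; apply: diag_self.
- move=> A KA.
  have [n0 [H1 H2]] := first_stage HM KA.
  exists (diag n0 A); split; first exact: diag_self.
  move=> B KB [BA nAB] HB.
  apply: (key HM KA KB _ BA H1 H2 HB).
  move=> E; apply: nAB; rewrite E; by [].
Qed.




Definition Wt k (ar : 'I_k -> nat) (th : structure ar -> qf ar) s (Y A : structure ar) :=
  exists b : nat -> nat, (forall x, x \in vars (th A) -> b x <= s) /\ qf_sat Y b (th A).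

Definition Et k (ar : 'I_k -> nat) s (Y A : structure ar) :=
  exists h : nat -> nat, (forall x y, x <= s -> y <= s -> h x = h y -> x = y) /\
    forall i (t : (ar i).-tuple nat), all (fun x => x <= s) t -> (Y i t <-> A i (map_tuple h t)).

Definition inD k (ar : 'I_k -> nat) (K : structure ar -> Prop) (g : structure ar -> nat)
  (th : structure ar -> qf ar) s (Y A : structure ar) :=
  K A /\ g A <= s /\ Wt th s Y A /\ Et s Y A.

Definition pickmin k (ar : 'I_k -> nat) (K : structure ar -> Prop) (g : structure ar -> nat)
  (th : structure ar -> qf ar) s (Y : structure ar) : option (structure ar) :=
  match excluded_middle_informative
     (exists A, inD K g th s Y A /\ forall B, inD K g th s Y B -> g A <= g B) with
  | left H => Some (proj1_sig (constructive_indefinite_description _ H))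
  | right _ => None
  end.

Fixpoint out k (ar : 'I_k -> nat) (K : structure ar -> Prop) (g : structure ar -> nat)
  (th : structure ar -> qf ar) s (X : structure ar) : option (structure ar) :=
  match s with
  | 0 => pickmin K g th 0 (restr 0 X)
  | s'.+1 =>
    match out K g th s' X with
    | Some A => if excluded_middle_informative (inD K g th s'.+1 (restr s'.+1 X) A)
                then Some A else pickmin K g th s'.+1 (restr s'.+1 X)
    | None => pickmin K g th s'.+1 (restr s'.+1 X)
    end
  end.

Lemma pickmin_some k (ar : 'I_k -> nat) K g th s (Y C : structure ar) :
  pickmin K g th s Y = Some C ->
  inD K g th s Y C /\ forall B, inD K g th s Y B -> g C <= g B.
Proof.
rewrite /pickmin; case: excluded_middle_informative => // H [<-].
exact: proj2_sig (constructive_indefinite_description _ H).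
Qed.

Lemma pickmin_none k (ar : 'I_k -> nat) K g th s (Y C : structure ar) :
  pickmin K g th s Y = None -> ~ inD K g th s Y C.
Proof.
rewrite /pickmin; case: excluded_middle_informative => // H _ HC; apply: H.
have [n [[A [HA <-]] Hmin]] := min_exists (P := fun n => exists A, inD K g th s Y A /\ g A = n)
  (ex_intro _ (g C) (ex_intro _ C (conj HC erefl))).
exists A; split=> // B HB; apply: Hmin; by exists B.
Qed.

Lemma out_in k (ar : 'I_k -> nat) K g th s (X C : structure ar) :
  out K g th s X = Some C -> inD K g th s (restr s X) C.
Proof.
case: s => [|s] /=; first by move=> /pickmin_some [].
destruct (out K g th s X) as [A|].
- case: excluded_middle_informative => [H E|_ /pickmin_some [] //].
  by case: E => <-.
- by move=> /pickmin_some [].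
Qed.

Lemma out_restr k (ar : 'I_k -> nat) K g th s n (X : structure ar) :
  s <= n -> out K g th s (restr n X) = out K g th s X.
Proof.
elim: s => [|s IH] sn /=; first by rewrite restr_restr.
rewrite IH ?(ltnW sn) // restr_restr //.
Qed.



Lemma Et_all k (ar : 'I_k -> nat) (S A : structure ar) s :
  iso S A -> Et s (restr s S) A.
Proof.
case=> f [fb Hf]; exists f; split; first by move=> x y _ _; apply: bij_inj.
move=> i t Ht; rewrite /restr -Hf; split=> [[]|] //.
Qed.

Lemma Et_mono k (ar : 'I_k -> nat) (S C : structure ar) s s' :
  Et s' (restr s' S) C -> s <= s' -> Et s (restr s S) C.
Proof.
move=> [h [Hh HS]] ss'; exists h; split.
  move=> x y xs ys; apply: Hh; exact: leq_trans ss'.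
move=> i t Ht.
have Ht' : all (fun x => x <= s') t by apply: sub_all Ht => x /= xs; exact: leq_trans xs ss'.
rewrite -(HS i t Ht') /restr; split; case=> _ H; by split.
Qed.

Lemma Wt_mono k (ar : 'I_k -> nat) th (S C : structure ar) s s' :
  Wt th s (restr s S) C -> s <= s' -> Wt th s' (restr s' S) C.
Proof.
move=> [b [Hb Hs]] ss'.
have Hb' : forall x, x \in vars (th C) -> b x <= s' by move=> x /Hb xs; exact: leq_trans xs ss'.
exists b; split=> //; apply/sat_restr => //; exact/(sat_restr _ Hb).
Qed.

Lemma sat_event k (ar : 'I_k -> nat) (S A : structure ar) a p :
  iso S A -> qf_sat A a p -> exists s b,
   (forall x, x \in vars p -> b x <= s) /\ qf_sat (restr s S) b p.
Proof.
move=> /iso_sym /iso_sat [f Hf] /Hf H.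
exists (bnd (fun x => f (a x)) (vars p)); exists (fun x => f (a x)).
have Hb : forall x, x \in vars p -> f (a x) <= bnd (fun x => f (a x)) (vars p).
  by move=> x; apply: (bnd_ge (fun x => f (a x))).
by split=> //; apply/sat_restr.
Qed.

Lemma Wt_Th k (ar : 'I_k -> nat) th (S A C : structure ar) s :
  iso S A -> Wt th s (restr s S) C -> exists a, qf_sat A a (th C).
Proof.
move=> /iso_sat [f Hf] [b [Hb /(sat_restr _ Hb) /Hf H]]; by exists (fun x => f (b x)).
Qed.

Lemma Et_Th k (ar : 'I_k -> nat) (S A C : structure ar) :
  iso S A -> (forall s, Et s (restr s S) C) -> Th_sub A C.
Proof.
move=> HSA HE phi [n [a Ha]].
have [s [b [Hb HS]]] := sat_event HSA Ha.
have [h [Hh HC]] := HE s.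
exists n; exists (fun x => h (b x)).
exact/(qf_transfer (P := fun x => x <= s) Hb Hh HC).
Qed.



Lemma learner_works k (ar : 'I_k -> nat) (K : structure ar -> Prop) g th :
  (forall A B, K A -> K B -> g A = g B -> A = B) ->
  sigma1_partial_order K ->
  (forall A, K A -> (exists a, qf_sat A a (th A)) /\
     forall B, K B -> Th_strict B A -> forall a, ~ qf_sat B a (th A)) ->
  nUs_learns (fun s X => out K g th s X) K.
Proof.
move=> ginj PO Hth; split.
  by move=> s S A _ /out_in [].
move=> S A _ KA HSA.
have Mo : forall n, out K g th n (restr n S) = out K g th n S by move=> n; apply: out_restr.
have [s1 Hs1] : exists s1, forall s, s1 <= s -> inD K g th s (restr s S) A.
  have [a Ha] := (Hth A KA).1.
  have [s0 [b [Hb Hs]]] := sat_event HSA Ha.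
  exists (maxn s0 (g A)) => s; rewrite geq_max => /andP [h1 h2].
  split=> //; split=> //; split; last exact: Et_all.
  apply: Wt_mono h1; by exists b.
have Dmono : forall s s', inD K g th s (restr s S) A -> s <= s' -> inD K g th s' (restr s' S) A.
  move=> s s' [_ [gs [W _]]] ss'; split=> //; split; first exact: leq_trans ss'.
  split; [exact: Wt_mono W ss' | exact: Et_all].
have stick : forall n, out K g th n S = Some A -> forall m, n <= m -> out K g th m S = Some A.
  move=> n On m nm; have Dn := out_in On.
  elim: m nm => [|m IH]; first by rewrite leqn0 => /eqP <-.
  rewrite leq_eqVlt => /orP [/eqP <- //| nm].
  rewrite /= (IH nm).
  case: excluded_middle_informative => // H; case: H; exact: Dmono Dn (ltnW nm).
have F2 : forall C, K C -> C <> A -> exists s, forall s', s <= s' -> ~ inD K g th s' (restr s' S) C.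
  move=> C KC CA.
  case: (classic (exists s, Wt th s (restr s S) C)) => [[s0 W]|nW]; last first.
    exists 0 => s' _ [_ [_ [W _]]]; apply: nW; by exists s'.
  have [a Ha] := Wt_Th HSA W.
  have nsub : ~ Th_sub A C.
    move=> sub.
    have nCA : ~ Th_sub C A.
      move=> sub'; apply: (PO C A KC KA CA) => phi; split; [apply: sub' | apply: sub].
    exact: ((Hth C KC).2 A KA (conj sub nCA) a Ha).
  have [s nE] : exists s, ~ Et s (restr s S) C.
    apply: NNPP => H; apply: nsub; apply: (Et_Th HSA) => s; apply: NNPP => nE; apply: H; by exists s.
  exists s => s' ss' [_ [_ [_ E]]]; apply: nE; exact: Et_mono E ss'.
have F3 : forall N, exists s, forall s', s <= s' -> forall B, inD K g th s' (restr s' S) B ->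
     g B < N -> B = A.
  elim=> [|N [s IH]]; first by exists 0.
  case: (classic (exists C, K C /\ g C = N /\ C <> A)) => [[C [KC [gC CA]]]|nC].
  - have [s2 H2] := F2 C KC CA.
    exists (maxn s s2) => s'; rewrite geq_max => /andP [h1 h2] B DB.
    rewrite ltnS leq_eqVlt => /orP [/eqP gB | gB]; last exact: IH h1 B DB gB.
    have BC : B = C by apply: ginj (DB.1) KC _; rewrite gB gC.
    by case: (H2 s' h2); rewrite -BC.
  - exists s => s' h1 B DB; rewrite ltnS leq_eqVlt => /orP [/eqP gB | gB]; last exact: IH h1 B DB gB.
    apply: NNPP => BA; apply: nC; exists B; split; [exact: DB.1| split=> //].
have [s2 Hs2] := F3 (g A).
set s3 := maxn s1 s2.
have pick : forall s, s3 <= s -> pickmin K g th s (restr s S) = Some A.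
  move=> s; rewrite /s3 geq_max => /andP [h1 h2].
  case E: pickmin => [C|]; last by case: (pickmin_none (C := A) E (Hs1 s h1)).
  have [DC Cmin] := pickmin_some E.
  have gCA := Cmin A (Hs1 s h1).
  have gAC : g A <= g C.
    rewrite leqNgt; apply/negP => lt; have CA := Hs2 s h2 C DC lt.
    by rewrite CA ltnn in lt.
  congr Some; apply: ginj (DC.1) KA _; apply/eqP; by rewrite eqn_leq gCA gAC.
have [n0 On0] : exists s, out K g th s S = Some A.
  apply: NNPP => H.
  have Hall : forall x, out K g th x S <> Some A by move=> x E; apply: H; exists x.
  have step : forall s, s3 <= s -> out K g th s.+1 S = out K g th s S.
    move=> s hs; have := Hall s.+1; rewrite /=.
    have hs' : s3 <= s.+1 by exact: leq_trans hs (leqnSn _).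
    destruct (out K g th s S) as [C|].
    + destruct (excluded_middle_informative _) => //; by rewrite pick.
    + by rewrite pick.
  have const : forall j, out K g th (s3 + j) S = out K g th s3 S.
    elim=> [|j IH]; first by rewrite addn0.
    by rewrite addnS step ?IH // leq_addr.
  have Hs3 : forall j, out K g th (s3 + j).+1 S = out K g th s3 S.
    by move=> j; rewrite -addnS const.
  case E3 : (out K g th s3 S) => [C|].
  - have DC : forall j, inD K g th (s3 + j) (restr (s3 + j) S) C.
      by move=> j; apply: out_in; rewrite const.
    have KC := (DC 0).1.
    have CA : C <> A by move=> CA; apply: (Hall s3); rewrite E3 CA.
    have [s HF] := F2 C KC CA.
    exact: HF (s3 + s) (leq_addl _ _) (DC s).
  - have := Hs3 0; rewrite /= addn0 E3 pick ?leqnSn //.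
split.
  exists n0 => n Hn; rewrite Mo; exact: stick On0 n Hn.
move=> m0; rewrite Mo => Om0 _ m Hm; rewrite Mo; exact: stick Om0 m (ltnW Hm).
Qed.


Theorem mainTheorem11 (k : nat) (ar : 'I_k -> nat) (K : structure ar -> Prop) :
  struct_family K -> (nUs_learnable K <-> solid_sigma1_partial_order K).
Proof.
move=> [[g ginj] _]; split; first exact: learnable_solid.
move=> [PO Hs].
have Hex : forall A, exists q : qf ar, K A -> (exists a, qf_sat A a q) /\
    forall B, K B -> Th_strict B A -> forall a, ~ qf_sat B a q.
  move=> A; case: (classic (K A)) => [KA|nKA]; last by exists (QTrue ar).
  have [phi [[n [a Ha]] Hphi]] := Hs A KA.
  exists (phi n) => _; split; first by exists a.
  move=> B KB BA a' Hb; apply: (Hphi B KB BA); by exists n; exists a'.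
exists (fun s X => out K g (fun A => proj1_sig (constructive_indefinite_description _ (Hex A))) s X).
apply: learner_works => //.
move=> A KA; exact: (proj2_sig (constructive_indefinite_description _ (Hex A)) KA).
Qed.
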